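(* Let $0<q<1$, $\tau,\sigma\in\mathbb{R}$ and $\phi\in[0,2\pi)$. Let $\{e_n\}_{n\in\mathbb{Z}_+}$ be the standard orthonormal basis of $\ell^2(\mathbb{Z}_+)$ (with $e_{-1}=0$), and define bounded operators $A,C$ on $\ell^2(\mathbb{Z}_+)$ by $Ae_n=\sqrt{1-q^{2n}}\,e_{n-1}$, $Ce_n=e^{i\phi}q^ne_n$. Let $$R=\tfrac12\Big(A^2+(A^* )^2+qC^2+q(C^* )^2+iq(q^{-\sigma}-q^{\sigma})(A^*C-C^*A)-iq(q^{-\tau}-q^{\tau})(CA-A^*C^* )-q(q^{-\sigma}-q^{\sigma})(q^{-\tau}-q^{\tau})C^*C\Big).$$ For $\lambda\in\{-q^{2k}\mid k\in\mathbb{Z}_+\}\cup\{q^{2\tau+2k}\mid k\in\mathbb{Z}_+\}$ let $$v_\lambda^\phi=\sum_{n=0}^\infty i^n e^{in\phi}p_n(\lambda)e_n,\qquad p_n(\lambda)=\frac{q^{-n\tau}q^{\frac12 n(n-1)}}{\sqrt{(q^2;q^2)_n}}\;{}_2\varphi_1\!\left(q^{-2n},\,q^{2\tau}/\lambda;\,0;\,q^2,\,-q^2\lambda\right).$$ Then for every such $\lambda$, $$2Rv_\lambda^\phi=qe^{-2i\phi}v^\phi_{\lambda q^2}+q^{-1}e^{2i\phi}(1-q^{-2\tau}\lambda)(1+\lambda)v^\phi_{\lambda/q^2}+\lambda q^{1-\tau}(q^{-\sigma}-q^{\sigma})v^\phi_\lambda,$$ where the middle term is interpreted as $0$ when its coefficient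 vanishes (i.e. for $\lambda=-1$ and $\lambda=q^{2\tau}$).
   Context: $R$ is the image of the element $\rho_{\tau,\sigma}$ of the quantum $SU(2)$ $C^*$-algebra under the representation $\pi_\phi$ ($\alpha\mapsto A$, $\gamma\mapsto C$). For $k\in\mathbb{Z}_+\cup\{\infty\}$, $(a;q)_k=\prod_{i=0}^{k-1}(1-aq^i)$, and ${}_2\varphi_1(a,b;c;p,z)=\sum_{j\ge0}\frac{(a;p)_j(b;p)_j}{(p;p)_j(c;p)_j}z^j$. The vectors $v_\lambda^\phi$ lie in $\ell^2(\mathbb{Z}_+)$ and form an orthogonal basis of it. *)

(* Defs.v *)
From HB Require Import structures.
From mathcomp Require Import all_boot all_order all_algebra.
From mathcomp Require Import all_classical all_reals all_analysis.
From mathcomp Require Import complex.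
Set Implicit Arguments. Unset Strict Implicit. Unset Printing Implicit Defensive.
Import Order.TTheory GRing.Theory Num.Theory.
Local Open Scope ring_scope.
Local Open Scope complex_scope.

Section Defs.
Variable R : realType.

Definition qpoch (a p : R) (k : nat) : R := \prod_(i < k) (1 - a * p ^+ i).

Definition phi21 (a b c p z : R) : R :=
  limn (fun N => \sum_(j < N)
          (qpoch a p j * qpoch b p j / (qpoch p p j * qpoch c p j) * z ^+ j)).

Definition expi (x : R) : R[i] := cos x +i* sin x.

Definition pn (q tau : R) (n : nat) (lam : R) : R :=
  powR q (- (n%:R * tau)) * powR q (n%:R * (n%:R - 1) / 2)
  / Num.sqrt (qpoch (q ^+ 2) (q ^+ 2) n)
  * phi21 (q ^+ (2 * n))^-1 (powR q (2 * tau) / lam) 0 (q ^+ 2) (- q ^+ 2 * lam).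

(* coordinates of v_lambda^phi in the standard basis e_n of l^2(Z_+) *)
Definition vlam (q tau phi lam : R) (n : nat) : R[i] :=
  'i ^+ n * expi (n%:R * phi) * (pn q tau n lam)%:C.

(* Operators on coordinate sequences: A e_n = sqrt(1-q^{2n}) e_{n-1},
   C e_n = e^{i phi} q^n e_n, and their adjoints. *)
Definition Aop (q : R) (v : nat -> R[i]) (m : nat) : R[i] :=
  (Num.sqrt (1 - q ^+ (2 * m.+1)))%:C * v m.+1.
Definition Adag (q : R) (v : nat -> R[i]) (m : nat) : R[i] :=
  if m is m'.+1 then (Num.sqrt (1 - q ^+ (2 * m)))%:C * v m' else 0.
Definition Cop (q phi : R) (v : nat -> R[i]) (m : nat) : R[i] :=
  expi phi * (q ^+ m)%:C * v m.
Definition Cdag (q phi : R) (v : nat -> R[i]) (m : nat) : R[i] :=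
  expi (- phi) * (q ^+ m)%:C * v m.

Definition Rop (q tau sigma phi : R) (v : nat -> R[i]) (m : nat) : R[i] :=
  let A := Aop q in let Ad := Adag q in
  let C := Cop q phi in let Cd := Cdag q phi in
  let s := (powR q (- sigma) - powR q sigma) in
  let t := (powR q (- tau) - powR q tau) in
  (1 / 2)%:C *
  ( A (A v) m + Ad (Ad v) m + q%:C * C (C v) m + q%:C * Cd (Cd v) m
  + 'i * (q * s)%:C * (Ad (C v) m - Cd (A v) m)
  - 'i * (q * t)%:C * (C (A v) m - Ad (Cd v) m)
  - (q * s * t)%:C * Cd (C v) m ).
End Defs.

(* Main.v *)
Require Import Defs.
From HB Require Import structures.
From mathcomp Require Import all_boot all_order all_algebra.
From mathcomp Require Import all_classical all_reals all_analysis.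
From mathcomp Require Import complex.
From mathcomp Require Import ring lra.
Import Order.TTheory GRing.Theory Num.Theory.
Local Open Scope ring_scope.

Section QP.
Variable R : realType.

Lemma qpochS (a p : R) j : qpoch a p j.+1 = qpoch a p j * (1 - a * p ^+ j).
Proof. by rewrite /qpoch big_ord_recr. Qed.

Lemma qpoch0 (a p : R) : qpoch a p 0 = 1.
Proof. by rewrite /qpoch big_ord0. Qed.

Lemma qpoch0a (p : R) j : qpoch 0 p j = 1.
Proof. by rewrite /qpoch big1 // => i _; rewrite mul0r subr0. Qed.

Lemma qpoch_gt0 (p : R) j : 0 < p < 1 -> 0 < qpoch p p j.
Proof.
move=> /andP[p0 p1]; elim: j => [|j IH]; first by rewrite qpoch0.
rewrite qpochS mulr_gt0 // subr_gt0.
have : p ^+ j <= 1 by rewrite exprn_ile1 // ltW.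
move=> h; apply: (@le_lt_trans _ _ (p * 1)); first by rewrite ler_wpM2l // ltW.
by rewrite mulr1.
Qed.

Variables (Q T u2 : R).
Hypotheses (hQ0 : 0 < Q) (hQ1 : Q < 1) (hu2 : 0 < u2) (hT : T = u2^-1).

Definition acoef n j := qpoch (Q ^+ n)^-1 Q j / qpoch Q Q j * (- Q) ^+ j.
Definition nphi (x : R) j := qpoch (T / x) Q j * x ^+ j.
Definition PP n x := \sum_(j < n.+1) acoef n j * nphi x j.

Lemma Qn0 n : Q ^+ n != 0.
Proof. by rewrite expf_neq0 // gt_eqF. Qed.

Lemma Qn_lt1 n : Q * Q ^+ n < 1.
Proof.
have h : Q ^+ n <= 1 by rewrite exprn_ile1 // ltW.
apply: (@le_lt_trans _ _ (Q * 1)); first by rewrite ler_wpM2l // ltW.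
by rewrite mulr1.
Qed.

Lemma Qn_neq1 n : 1 - Q * Q ^+ n != 0.
Proof. by rewrite subr_eq0 eq_sym lt_eqF // Qn_lt1. Qed.

Lemma qpQ0 j : qpoch Q Q j != 0.
Proof. by rewrite gt_eqF // qpoch_gt0 // hQ0 hQ1. Qed.

Lemma Q1n0 : 1 - Q != 0.
Proof. by have := Qn_neq1 0; rewrite expr0 mulr1. Qed.

Lemma Qne0 : Q != 0.
Proof. by rewrite gt_eqF. Qed.

Lemma acoef0 n : acoef n 0 = 1.
Proof. by rewrite /acoef !qpoch0 expr0 divr1 mulr1. Qed.

Lemma acoefS n j : acoef n j.+1 =
  acoef n j * ((1 - (Q ^+ n)^-1 * Q ^+ j) * (- Q) / (1 - Q * Q ^+ j)).
Proof.
rewrite /acoef !qpochS exprS.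
have := qpQ0 j; have := Qn_neq1 j => h1 h2.
field.
by rewrite h1 h2 Qn0.
Qed.

Lemma acoef_big n j : (n < j)%N -> acoef n j = 0.
Proof.
move=> /subnKC <-; elim: (j - n.+1)%N => [|d IH].
  rewrite addn0 acoefS.
  by rewrite mulVf ?Qn0 // subrr !mul0r mulr0.
by rewrite addnS acoefS IH mul0r.
Qed.

Lemma C2 n j : (1 - Q ^+ n.+1) * acoef n j + Q ^+ n.+1 * acoef n.+1 j
  = Q ^+ j * acoef n.+1 j.
Proof.
elim: j => [|j IH]; first by rewrite !acoef0 expr0; ring.
have hn : 1 - Q ^+ n.+1 != 0 by rewrite exprS Qn_neq1.
have IH' : acoef n j = (Q ^+ j * acoef n.+1 j - Q ^+ n.+1 * acoef n.+1 j)
   / (1 - Q ^+ n.+1).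
  by rewrite -IH; field.
rewrite !acoefS IH' !exprS.
have := Qn_neq1 j; have := Qn_neq1 n; have := Qn0 n; have := Qn0 j.
move=> h1 h2 h3 h4.
have hQ : Q != 0 by rewrite gt_eqF.
rewrite exprS in hn.
field; by rewrite ?h1 ?h2 ?h3 ?h4 ?hn ?hQ.
Qed.

Lemma C1 n j : Q ^+ n * (acoef n.+1 j.+1 - acoef n j.+1) = acoef n j.
Proof.
have := Qn_neq1 n; have := Qn0 n; have hQ : Q != 0 by rewrite gt_eqF.
move=> h3 h4.
elim: j => [|j IH].
  rewrite !acoefS !acoef0 !expr0 exprS.
  have h0 : 1 - Q != 0 by have := Qn_neq1 0; rewrite expr0 mulr1.
  field. by rewrite h0 h3 hQ.
have IH' : acoef n.+1 j.+1 = acoef n j.+1 + acoef n j / Q ^+ n.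
  by rewrite -IH; field.
rewrite [acoef n.+1 j.+2]acoefS IH' [acoef n j.+2]acoefS !(acoefS n j) !exprS.
have := Qn_neq1 j; have := Qn_neq1 j.+1; rewrite exprS.
move=> h1 h2.
field; by rewrite ?h1 ?h2 ?h3 ?h4 ?hQ.
Qed.

Lemma nphi0 x : nphi x 0 = 1.
Proof. by rewrite /nphi qpoch0 expr0 mulr1. Qed.

Lemma nphiS x j : x != 0 -> nphi x j.+1 = nphi x j * (x - T * Q ^+ j).
Proof.
move=> hx; rewrite /nphi qpochS exprSr; field; exact: hx.
Qed.

Lemma PP_ext n x N : (n < N)%N -> PP n x = \sum_(j < N) acoef n j * nphi x j.
Proof.
move=> hN; rewrite /PP -(subnKC hN) big_split_ord /=.
rewrite [X in _ = _ + X]big1 ?addr0 // => i _.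
by rewrite acoef_big ?mul0r // ltnS leq_addr.
Qed.

Lemma PP0 x : PP 0 x = 1.
Proof. by rewrite /PP big_ord1 acoef0 nphi0 mulr1. Qed.

Lemma PP1 x : x != 0 -> PP 1 x = 1 + x - T.
Proof.
move=> hx; rewrite /PP big_ord_recr /= big_ord1 acoef0 nphi0 (nphiS x 0 hx) nphi0.
rewrite acoefS acoef0 !expr0 !expr1.
field; by rewrite Q1n0 Qne0.
Qed.

Lemma tele n x : x != 0 -> forall N,
  \sum_(j < N.+1) (u2 * Q ^+ n.+1 * (acoef n.+2 j * nphi x j)
     - (x * u2 + (u2 - 1) * Q ^+ n.+1) * (acoef n.+1 j * nphi x j)
     + (1 - Q ^+ n.+1) * (acoef n j * nphi x j))
  = - u2 * (acoef n.+1 N * nphi x N.+1).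
Proof.
move=> hx; have hu : u2 != 0 by rewrite gt_eqF.
elim=> [|N IH].
  rewrite big_ord1 !acoef0 (nphiS x 0 hx) nphi0 hT expr0.
  field; exact: hu.
rewrite big_ord_recr /= IH.
have e1 : acoef n.+2 N.+1 = acoef n.+1 N.+1 + acoef n.+1 N / Q ^+ n.+1.
  by rewrite -(C1 n.+1 N); field; rewrite Qn0.
have hn : 1 - Q ^+ n.+1 != 0 by rewrite exprS Qn_neq1.
have e2 : acoef n N.+1 = (Q ^+ N.+1 * acoef n.+1 N.+1 - Q ^+ n.+1 * acoef n.+1 N.+1)
   / (1 - Q ^+ n.+1).
  by rewrite -(C2 n N.+1); field.
rewrite e1 e2 [nphi x N.+2](nphiS _ _ hx) hT.
have := Qn0 n.+1; have := Qn0 N.+1 => h1 h2.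
field; by rewrite ?h1 ?h2 ?hn ?hu.
Qed.

Lemma I0S n x : x != 0 ->
  u2 * Q ^+ n.+1 * PP n.+2 x
  = (x * u2 + (u2 - 1) * Q ^+ n.+1) * PP n.+1 x - (1 - Q ^+ n.+1) * PP n x.
Proof.
move=> hx; apply/eqP; rewrite -subr_eq0.
rewrite (@PP_ext n.+2 x n.+3 (ltnSn _)) (@PP_ext n.+1 x n.+3) // (@PP_ext n x n.+3) //.
rewrite !mulr_sumr -!sumrB.
have hh : forall a b c : R, a - (b - c) = a - b + c by move=> *; ring.
under eq_bigr => i _ do rewrite hh.
rewrite (tele n x hx n.+2).
  by rewrite acoef_big // mul0r mulr0.
by rewrite ltnS leqW.
Qed.

Lemma PP2S n x : x != 0 -> PP n.+2 x =
  ((x * u2 + (u2 - 1) * Q ^+ n.+1) * PP n.+1 x - (1 - Q ^+ n.+1) * PP n x)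
  / (u2 * Q ^+ n.+1).
Proof.
move=> hx; rewrite -I0S //; field.
by rewrite Qn0 gt_eqF.
Qed.
Arguments PP2S n [x].

Lemma u2n0 : u2 != 0. Proof. by rewrite gt_eqF. Qed.

Lemma Lp_aux n : forall x, x != 0 ->
  PP n (x * Q) = PP n x - Q * x * ((x * u2 / Q ^+ n + (u2 - 1)) * PP n x - u2 * PP n.+1 x).
Proof.
suff H : forall n, (forall x, x != 0 ->
  PP n (x * Q) = PP n x - Q * x * ((x * u2 / Q ^+ n + (u2 - 1)) * PP n x - u2 * PP n.+1 x))
  /\ (forall x, x != 0 ->
  PP n.+1 (x * Q) = PP n.+1 x - Q * x * ((x * u2 / Q ^+ n.+1 + (u2 - 1)) * PP n.+1 x - u2 * PP n.+2 x)).
  by case: (H n).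
elim=> [|k [IH0 IH1]].
  split=> x hx; have hxQ : x * Q != 0 by rewrite mulf_neq0 // Qne0.
    rewrite !PP0 PP1 // hT expr0; field; exact: u2n0.
  rewrite (PP2S 0 hx) !PP1 // !PP0 hT !expr1.
  field; by rewrite u2n0 Qne0.
split; first exact: IH1.
move=> x hx; have hxQ : x * Q != 0 by rewrite mulf_neq0 // Qne0.
rewrite (PP2S k hxQ) (IH1 x hx) (IH0 x hx) (PP2S k.+1 hx) (PP2S k hx).
rewrite !exprS.
field; by rewrite u2n0 Qne0 Qn0.
Qed.

Arguments Lp_aux n [x].

Lemma Up n y : y != 0 ->
  PP n (y * Q) - y * Q * u2 * PP n.+1 (y * Q) = (1 - u2 * y * Q) * (1 + y * Q) * PP n y.
Proof.
move=> hy.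
rewrite (Lp_aux n hy) (Lp_aux n.+1 hy) (PP2S n hy) exprS.
field; by rewrite u2n0 Qne0 Qn0.
Qed.

End QP.

Lemma limn_sum_ev (R : realType) (f : nat -> R) (N : nat) :
  (forall j, (N <= j)%N -> f j = 0) ->
  limn (fun M => \sum_(j < M) f j) = \sum_(j < N) f j.
Proof.
move=> H; apply: cvg_lim => //.
apply: cvg_near_cst.
near=> M.
have : (N <= M)%N by near: M; apply: nbhs_infty_ge.
move=> hM.
rewrite -(subnKC hM) big_split_ord /= [X in _ + X = _]big1 ?addr0 // => i _.
by apply: H; rewrite leq_addr.
Unshelve. all: by end_near.
Qed.

Section Main.
Variables (R : realType) (q tau : R).
Hypotheses (hq0 : 0 < q) (hq1 : q < 1).

Let Q := q ^+ 2.
Let T := powR q (2 * tau).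
Let u := powR q (- tau).
Let u2 := powR q (- (2 * tau)).

Lemma qn0 : q != 0. Proof. by rewrite gt_eqF. Qed.

Lemma powRD' (a b : R) : powR q (a + b) = powR q a * powR q b.
Proof. by rewrite powRD // qn0 implybT. Qed.

Lemma hQ0 : 0 < Q. Proof. by rewrite /Q exprn_gt0. Qed.
Lemma hQ1 : Q < 1.
Proof. by rewrite /Q expr2 -(mulr1 1) ltr_pM // ltW. Qed.

Lemma u_gt0 : 0 < u. Proof. by rewrite /u powR_gt0. Qed.
Lemma u2E : u2 = u * u.
Proof. by rewrite /u2 /u -powRD' mulrDl mul1r opprD. Qed.
Lemma u2_gt0 : 0 < u2. Proof. by rewrite u2E mulr_gt0 // u_gt0. Qed.
Lemma TE : T = u2^-1.
Proof. by rewrite /T /u2 powRN invrK. Qed.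
Lemma powRtau : powR q tau = u^-1.
Proof. by rewrite /u powRN invrK. Qed.
Lemma powR1tau : powR q (1 - tau) = q * u.
Proof. by rewrite powRD' powRr1 // (ltW hq0). Qed.
Lemma powRk (k : nat) : powR q (2 * tau + 2 * k%:R) = T * Q ^+ k.
Proof.
by rewrite powRD' -natrM powR_mulrn ?(ltW hq0) // exprM.
Qed.

Local Notation P := (PP R Q T).

Lemma sm_eq n x j :
  qpoch (q ^+ (2 * n))^-1 (q ^+ 2) j * qpoch (T / x) (q ^+ 2) j /
    (qpoch (q ^+ 2) (q ^+ 2) j * qpoch 0 (q ^+ 2) j) * (- q ^+ 2 * x) ^+ j
  = acoef R Q n j * nphi R Q T x j.
Proof.
rewrite /acoef /nphi qpoch0a mulr1 exprMn exprM -/Q.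
have := qpQ0 R Q hQ0 hQ1 j => h.
field; exact: h.
Qed.

Lemma phi21_PP n x : x != 0 ->
  phi21 (q ^+ (2 * n))^-1 (T / x) 0 (q ^+ 2) (- q ^+ 2 * x) = P n x.
Proof.
move=> hx; rewrite /phi21; apply: (cvg_lim (@norm_hausdorff _ _)).
apply: cvg_near_cst; near=> M.
have : (n.+1 <= M)%N by near: M; apply: nbhs_infty_ge.
move=> hM.
under eq_bigr => j _ do rewrite sm_eq.
rewrite /PP -(subnKC hM) big_split_ord /= [X in _ + X = _]big1 ?addr0 // => i _.
by rewrite (acoef_big R Q hQ0 hQ1) ?mul0r // addSn ltnS leq_addr.
Unshelve. all: by end_near.
Qed.

Definition cc n := powR q (- (n%:R * tau)) * powR q (n%:R * (n%:R - 1) / 2)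
  / Num.sqrt (qpoch (q ^+ 2) (q ^+ 2) n).
Definition ss k := Num.sqrt (1 - q ^+ (2 * k)).

Lemma pn_eq n x : x != 0 -> pn q tau n x = cc n * P n x.
Proof. by move=> hx; rewrite /pn -phi21_PP. Qed.

Lemma qQn n : q ^+ (2 * n) = Q ^+ n.
Proof. by rewrite exprM. Qed.

Lemma ss_gt0 n : 0 < ss n.+1.
Proof.
rewrite /ss sqrtr_gt0 qQn exprS subr_gt0.
exact: (Qn_lt1 R Q hQ0 hQ1 n).
Qed.

Lemma ss_sq n : ss n.+1 * ss n.+1 = 1 - Q ^+ n.+1.
Proof.
rewrite /ss -expr2 sqr_sqrtr ?qQn // subr_ge0 exprS ltW //.
exact: (Qn_lt1 R Q hQ0 hQ1 n).
Qed.

Lemma sqp_gt0 n : 0 < Num.sqrt (qpoch (q ^+ 2) (q ^+ 2) n).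
Proof. by rewrite sqrtr_gt0 qpoch_gt0 // -/Q hQ0 hQ1. Qed.

Lemma ccS n : ss n.+1 * cc n.+1 = u * q ^+ n * cc n.
Proof.
rewrite /cc.
have e1 : - (n.+1%:R * tau) = - (n%:R * tau) + - tau.
  by rewrite -natr1; ring.
have e2 : n.+1%:R * (n.+1%:R - 1) / 2 = n%:R * (n%:R - 1) / 2 + n%:R :> R.
  by rewrite -natr1; field.
rewrite e1 e2 !powRD' powR_mulrn ?(ltW hq0) // qpochS sqrtrM; last first.
  by apply: ltW; rewrite qpoch_gt0 // -/Q hQ0 hQ1.
have h1 := sqp_gt0 n; have h2 := ss_gt0 n.
have -> : Num.sqrt (1 - q ^+ 2 * q ^+ 2 ^+ n) = ss n.+1.
  by rewrite /ss qQn -exprS.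
rewrite -/u.
field; by rewrite !gt_eqF.
Qed.


Lemma qpow_gt0 n : 0 < q ^+ n. Proof. by rewrite exprn_gt0. Qed.
Lemma QnE n : Q ^+ n = q ^+ n * q ^+ n.
Proof. by rewrite /Q -exprM mulnC exprM expr2. Qed.
Lemma cc_gt0 n : cc n != 0.
Proof.
rewrite /cc !mulf_neq0 ?invr_eq0 ?gt_eqF ?powR_gt0 //.
exact: sqp_gt0.
Qed.

Lemma ccU n : cc n.+1 = u * q ^+ n * cc n / ss n.+1.
Proof.
rewrite -ccS; have h := ss_gt0 n; field; by rewrite gt_eqF.
Qed.

Lemma ccD n : cc n = (1 - Q ^+ n.+1) * cc n.+1 / (u * q ^+ n * ss n.+1).
Proof.
rewrite -ss_sq -(mulrA (ss n.+1)) ccS; have h := ss_gt0 n; have h2 := u_gt0.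
have h3 := qpow_gt0 n.
field; by rewrite !gt_eqF.
Qed.

Ltac nz := rewrite ?(gt_eqF u_gt0, gt_eqF (qpow_gt0 _), gt_eqF (ss_gt0 _), gt_eqF hq0, gt_eqF u2_gt0, cc_gt0).

Lemma RP n lam : lam != 0 ->
  - (ss n.+1 * ss n.+2 * pn q tau n.+2 lam)
  + q * (powR q (- tau) - powR q tau) * q ^+ n * ss n.+1 * pn q tau n.+1 lam
  + q * q ^+ n * q ^+ n * pn q tau n lam
  = q^-1 * ((1 - powR q (- (2 * tau)) * lam) * (1 + lam)) * pn q tau n (lam / q ^+ 2).
Proof.
move=> hl.
have hy : lam / q ^+ 2 != 0 by rewrite mulf_neq0 // invr_eq0 gt_eqF // hQ0.
have hU : (1 - u2 * lam) * (1 + lam) * P n (lam / q ^+ 2)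
   = P n lam - lam * u2 * P n.+1 lam.
  have e : lam / q ^+ 2 * Q = lam by rewrite /Q; field; rewrite gt_eqF // hQ0.
  have := @Up R Q T u2 hQ0 hQ1 u2_gt0 TE n _ hy; rewrite e => ->.
  by rewrite -(mulrA u2) e.
rewrite -/u2 -/u powRtau.
apply: (@eq_trans _ _ (q^-1 * cc n * ((1 - u2 * lam) * (1 + lam) * P n (lam / q ^+ 2)))); last first.
  by rewrite (pn_eq n _ hy); ring.
rewrite hU !pn_eq // ccU ccU (@PP2S R Q T u2 hQ0 hQ1 u2_gt0 TE n lam hl) !exprS !QnE u2E.
rewrite /Q; field; nz; by [].
Qed.


Lemma RM m lam : lam != 0 ->
  ss m.+2 * ss m.+1 * pn q tau m lam - q * q ^+ m.+2 * q ^+ m.+2 * pn q tau m.+2 lam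
  - q * (powR q (- tau) - powR q tau) * ss m.+2 * q ^+ m.+1 * pn q tau m.+1 lam
  + q * pn q tau m.+2 (lam * q ^+ 2) = 0.
Proof.
move=> hl.
have hxQ : lam * q ^+ 2 != 0 by rewrite mulf_neq0 // gt_eqF // hQ0.
rewrite -/u powRtau !pn_eq // (@Lp_aux R Q T u2 hQ0 hQ1 u2_gt0 TE m.+2 lam hl).
rewrite (@PP2S R Q T u2 hQ0 hQ1 u2_gt0 TE m.+1 lam hl).
rewrite (@PP2S R Q T u2 hQ0 hQ1 u2_gt0 TE m lam hl).
rewrite (ccD m) (ccD m.+1) !exprS !QnE u2E.
rewrite /Q; field; nz; by [].
Qed.

Lemma RM1 lam : lam != 0 ->
  q * q ^+ 1 * q ^+ 1 * pn q tau 1 lam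
  + q * (powR q (- tau) - powR q tau) * ss 1 * q ^+ 0 * pn q tau 0 lam
  = q * pn q tau 1 (lam * q ^+ 2).
Proof.
move=> hl.
have hxQ : lam * q ^+ 2 != 0 by rewrite mulf_neq0 // gt_eqF // hQ0.
rewrite -/u powRtau !pn_eq // !(@PP1 R Q T hQ0 hQ1) // (@PP0 R Q T).
rewrite (ccD 0) TE u2E !expr0 !expr1.
rewrite /Q; field; nz; by [].
Qed.

Lemma RM0 lam : lam != 0 ->
  q ^+ 0 * q ^+ 0 * pn q tau 0 lam = pn q tau 0 (lam * q ^+ 2).
Proof.
move=> hl.
have hxQ : lam * q ^+ 2 != 0 by rewrite mulf_neq0 // gt_eqF // hQ0.
by rewrite !pn_eq // !(@PP0 R Q T) !expr0 !mul1r.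
Qed.

Lemma RZ m lam (sg : R) : lam != 0 ->
  q * sg * ss m.+1 * q ^+ m * pn q tau m lam
  + q * sg * q ^+ m.+1 * ss m.+2 * pn q tau m.+2 lam
  - q * sg * (powR q (- tau) - powR q tau) * q ^+ m.+1 * q ^+ m.+1 * pn q tau m.+1 lam
  = lam * powR q (1 - tau) * sg * pn q tau m.+1 lam.
Proof.
move=> hl.
rewrite -/u powRtau powR1tau !pn_eq //.
rewrite (@PP2S R Q T u2 hQ0 hQ1 u2_gt0 TE m lam hl).
rewrite (ccD m) (ccU m.+1) !exprS !QnE u2E.
rewrite /Q; field; nz; by [].
Qed.

Lemma RZ0 lam (sg : R) : lam != 0 ->
  q * sg * q ^+ 0 * ss 1 * pn q tau 1 lam
  - q * sg * (powR q (- tau) - powR q tau) * q ^+ 0 * q ^+ 0 * pn q tau 0 lam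
  = lam * powR q (1 - tau) * sg * pn q tau 0 lam.
Proof.
move=> hl.
rewrite -/u powRtau powR1tau !pn_eq // (@PP1 R Q T hQ0 hQ1) // (@PP0 R Q T).
rewrite (ccU 0) TE u2E !expr0.
rewrite /Q; field; nz; by [].
Qed.

End Main.

Local Open Scope complex_scope.

Section Cx.
Variable R : realType.

Lemma mulii : 'i * 'i = -1 :> R[i].
Proof. by rewrite -expr2 sqr_i. Qed.

Ltac pushC := rewrite ?(rmorphD, rmorphB, rmorphM, rmorphN, rmorph0, rmorph1).

Lemma mode_plus (W E : R[i]) (s1 s2 q t qn p0 p1 p2 qi K pu : R) :
  - (s1 * s2 * p2) + q * t * qn * s1 * p1 + q * qn * qn * p0 = qi * K * pu ->
  s1%:C * (s2%:C * (W * ('i * 'i) * (E * E) * p2%:C))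
  + q%:C * (E * qn%:C * (E * qn%:C * (W * p0%:C)))
  - 'i * (q * t)%:C * (E * qn%:C * (s1%:C * (W * ('i * E) * p1%:C)))
  = (qi%:C * (E * E) * K%:C) * (W * pu%:C).
Proof.
move=> h; apply/subr0_eq.
rewrite (_ : _ - _ = W * (E * E) * (('i * 'i + 1) * (s1 * s2 * p2 - q * t * qn * s1 * p1)%:C
   + ((- (s1 * s2 * p2) + q * t * qn * s1 * p1 + q * qn * qn * p0) - qi * K * pu)%:C)).
  by rewrite h subrr mulii addNr rmorph0; ring.
by pushC; ring.
Qed.

Lemma mode_minus (W E Ei : R[i]) (s1 s2 q t qn1 qn2 p0 p1 p2 pd : R) :
  E * Ei = 1 ->
  s2 * s1 * p0 - q * qn2 * qn2 * p2 - q * t * s2 * qn1 * p1 + q * pd = 0 ->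
  s2%:C * (s1%:C * (W * p0%:C))
  + q%:C * (Ei * qn2%:C * (Ei * qn2%:C * (W * ('i * 'i) * (E * E) * p2%:C)))
  + 'i * (q * t)%:C * (s2%:C * (Ei * qn1%:C * (W * ('i * E) * p1%:C)))
  = (q%:C * (Ei * Ei)) * (W * ('i * 'i) * (E * E) * pd%:C).
Proof.
move=> hE h; apply/subr0_eq.
rewrite (_ : _ - _ = W * ((('i * 'i) * ((E * Ei) * (E * Ei)) + 1) * (q * qn2 * qn2 * p2 - q * pd)%:C
   + (('i * 'i) * (E * Ei) + 1) * (q * t * s2 * qn1 * p1)%:C
   + (s2 * s1 * p0 - q * qn2 * qn2 * p2 - q * t * s2 * qn1 * p1 + q * pd)%:C)).
  by rewrite h hE mulii rmorph0; ring.
by pushC; ring.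
Qed.

Lemma mode_minus1 (W E Ei : R[i]) (s q t qn0 qn1 p0 p1 pd : R) :
  E * Ei = 1 ->
  q * qn1 * qn1 * p1 + q * t * s * qn0 * p0 = q * pd ->
  s%:C * 0
  + q%:C * (Ei * qn1%:C * (Ei * qn1%:C * (W * ('i * E) * p1%:C)))
  + 'i * (q * t)%:C * (s%:C * (Ei * qn0%:C * (W * p0%:C)))
  = (q%:C * (Ei * Ei)) * (W * ('i * E) * pd%:C).
Proof.
move=> hE h; apply/subr0_eq.
rewrite (_ : _ - _ = W * 'i * Ei * ((E * Ei - 1) * (q * qn1 * qn1 * p1 - q * pd)%:C
   + (q * qn1 * qn1 * p1 + q * t * s * qn0 * p0 - q * pd)%:C)).
  by rewrite h hE !subrr rmorph0; ring.
by pushC; ring.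
Qed.

Lemma mode_minus0 (W Ei : R[i]) (q t qn0 p0 pd : R) :
  qn0 * qn0 * p0 = pd ->
  0 + q%:C * (Ei * qn0%:C * (Ei * qn0%:C * (W * p0%:C))) + 'i * (q * t)%:C * 0
  = (q%:C * (Ei * Ei)) * (W * pd%:C).
Proof.
move=> h; rewrite -h; pushC; ring.
Qed.

Lemma mode_zero (W E Ei : R[i]) (sg t q s1 s2 qm qm1 p0 p1 p2 lP : R) :
  E * Ei = 1 ->
  q * sg * s1 * qm * p0 + q * sg * qm1 * s2 * p2 - q * sg * t * qm1 * qm1 * p1 = lP * p1 ->
  'i * (q * sg)%:C * (s1%:C * (E * qm%:C * (W * p0%:C))
     - Ei * qm1%:C * (s2%:C * (W * ('i * 'i) * (E * E) * p2%:C)))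
  - (q * sg * t)%:C * (Ei * qm1%:C * (E * qm1%:C * (W * ('i * E) * p1%:C)))
  = lP%:C * (W * ('i * E) * p1%:C).
Proof.
move=> hE h; apply/subr0_eq.
rewrite (_ : _ - _ = W * 'i * E * (- (E * Ei * ('i * 'i) + 1) * (q * sg * qm1 * s2 * p2)%:C
   - (E * Ei - 1) * (q * sg * t * qm1 * qm1 * p1)%:C
   + (q * sg * s1 * qm * p0 + q * sg * qm1 * s2 * p2 - q * sg * t * qm1 * qm1 * p1 - lP * p1)%:C)).
  by rewrite h hE mulii !subrr rmorph0; ring.
by pushC; ring.
Qed.

Lemma mode_zero0 (W E Ei : R[i]) (sg t q s1 qn0 p0 p1 lP : R) :
  E * Ei = 1 ->
  q * sg * qn0 * s1 * p1 - q * sg * t * qn0 * qn0 * p0 = lP * p0 ->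
  'i * (q * sg)%:C * (0 - Ei * qn0%:C * (s1%:C * (W * ('i * E) * p1%:C)))
  - (q * sg * t)%:C * (Ei * qn0%:C * (E * qn0%:C * (W * p0%:C)))
  = lP%:C * (W * p0%:C).
Proof.
move=> hE h; apply/subr0_eq.
rewrite (_ : _ - _ = W * (- (('i * 'i) * (E * Ei) + 1) * (q * sg * qn0 * s1 * p1)%:C
   - (E * Ei - 1) * (q * sg * t * qn0 * qn0 * p0)%:C
   + (q * sg * qn0 * s1 * p1 - q * sg * t * qn0 * qn0 * p0 - lP * p0)%:C)).
  by rewrite h hE mulii !subrr rmorph0; ring.
by pushC; ring.
Qed.

End Cx.

Section Fin.
Variable R : realType.

Lemma expiD (x y : R) : expi (x + y) = expi x * expi y.
Proof.
rewrite /expi cosD sinD; apply/eqP; rewrite eq_complex /=.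
by apply/andP; split; apply/eqP; ring.
Qed.

Lemma expi0 : expi (0 : R) = 1.
Proof. by rewrite /expi cos0 sin0. Qed.

Lemma expiNK (x : R) : expi x * expi (- x) = 1.
Proof. by rewrite -expiD subrr expi0. Qed.

Lemma expiS n (x : R) : expi (n.+1%:R * x) = expi (n%:R * x) * expi x.
Proof. by rewrite -natr1 mulrDl mul1r expiD. Qed.

Lemma expi2 (x : R) : expi (2 * x) = expi x * expi x.
Proof. by rewrite mulr2n mulrDl mul1r expiD. Qed.

Lemma expiN2 (x : R) : expi (- (2 * x)) = expi (- x) * expi (- x).
Proof. by rewrite -expi2 mulrN. Qed.

Lemma vlamS q tau phi (x : R) n : vlam q tau phi x n.+1 =
  ('i ^+ n * expi (n%:R * phi)) * ('i * expi phi) * (pn q tau n.+1 x)%:C.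
Proof. by rewrite /vlam exprS expiS; ring. Qed.

Lemma vlamSS q tau phi (x : R) n : vlam q tau phi x n.+2 =
  ('i ^+ n * expi (n%:R * phi)) * ('i * 'i) * (expi phi * expi phi) * (pn q tau n.+2 x)%:C.
Proof. by rewrite /vlam !exprS !expiS; ring. Qed.

Lemma AopE q (v : nat -> R[i]) m : Aop q v m = (ss R q m.+1)%:C * v m.+1.
Proof. by []. Qed.
Lemma AdagS q (v : nat -> R[i]) m : Adag q v m.+1 = (ss R q m.+1)%:C * v m.
Proof. by []. Qed.
Lemma Adag0 q (v : nat -> R[i]) : Adag q v 0 = 0.
Proof. by []. Qed.

End Fin.

Theorem proposition6p2 (R : realType) (q tau sigma phi : R)
  (hq0 : 0 < q) (hq1 : q < 1) (hphi0 : 0 <= phi) (hphi1 : phi < 2 * pi)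
  (lam : R)
  (hlam : (exists k : nat, lam = - q ^+ (2 * k)) \/
          (exists k : nat, lam = powR q (2 * tau + 2 * k%:R))) :
  forall n : nat,
    2 * Rop q tau sigma phi (vlam q tau phi lam) n =
      (q%:C * expi (- (2 * phi))) * vlam q tau phi (lam * q ^+ 2) n
    + (q^-1%:C * expi (2 * phi) * ((1 - powR q (- (2 * tau)) * lam) * (1 + lam))%:C)
        * vlam q tau phi (lam / q ^+ 2) n
    + (lam * powR q (1 - tau) * (powR q (- sigma) - powR q sigma))%:C
        * vlam q tau phi lam n.
Proof.
have hl : lam != 0.
  case: hlam => [[k ->]|[k ->]]; first by rewrite oppr_eq0 expf_neq0 // gt_eqF.
  by rewrite gt_eqF // powR_gt0.
move=> n.
have hE : expi phi * expi (- phi) = 1 by apply: expiNK.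
have MP : Aop q (Aop q (vlam q tau phi lam)) n
   + q%:C * Cop q phi (Cop q phi (vlam q tau phi lam)) n
   - 'i * (q * (powR q (- tau) - powR q tau))%:C * Cop q phi (Aop q (vlam q tau phi lam)) n
   = (q^-1%:C * expi (2 * phi) * ((1 - powR q (- (2 * tau)) * lam) * (1 + lam))%:C)
        * vlam q tau phi (lam / q ^+ 2) n.
  rewrite /Cop !AopE expi2 vlamSS vlamS.
  apply: mode_plus; exact: RP.
have MM : Adag q (Adag q (vlam q tau phi lam)) n
   + q%:C * Cdag q phi (Cdag q phi (vlam q tau phi lam)) n
   + 'i * (q * (powR q (- tau) - powR q tau))%:C * Adag q (Cdag q phi (vlam q tau phi lam)) n
   = (q%:C * expi (- (2 * phi))) * vlam q tau phi (lam * q ^+ 2) n.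
  clear MP; rewrite expiN2; case: n => [|[|m]].
  - rewrite !Adag0 /Cdag; apply: mode_minus0; exact: RM0.
  - rewrite !AdagS Adag0 /Cdag !vlamS; apply: mode_minus1 => //; exact: RM1.
  - rewrite !AdagS /Cdag !vlamSS vlamS; apply: mode_minus => //; exact: RM.
have MZ : 'i * (q * (powR q (- sigma) - powR q sigma))%:C *
     (Adag q (Cop q phi (vlam q tau phi lam)) n - Cdag q phi (Aop q (vlam q tau phi lam)) n)
   - (q * (powR q (- sigma) - powR q sigma) * (powR q (- tau) - powR q tau))%:C
     * Cdag q phi (Cop q phi (vlam q tau phi lam)) n
   = (lam * powR q (1 - tau) * (powR q (- sigma) - powR q sigma))%:C * vlam q tau phi lam n.
  clear MP MM; case: n => [|m].
  - rewrite Adag0 /Cdag /Cop !AopE vlamS; apply: mode_zero0 => //; exact: RZ0.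
  - rewrite AdagS /Cdag /Cop !AopE vlamSS !vlamS; apply: mode_zero => //; exact: RZ.
rewrite -MM -MP -MZ /Rop; cbv zeta.
have h2 : (2 : R[i]) * (1 / 2)%:C = 1.
  rewrite -(rmorph_nat (real_complex R) 2) -rmorphM mul1r divff ?rmorph1 //.
rewrite mulrA h2 mul1r; ring.
Qed.
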